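(* Let $h\in\mathbb{Z}$ and $n\ge0$. The number of partitions $\lambda\vdash n$ having an $h$-fixed hook arising from a part of size $1$ equals the number of partitions of $n-h$ that have at least $1-h$ parts and in which the part $1$ occurs exactly once (this number being $0$ if $n-h<0$). Equivalently, the generating function of the former is $$q^{h+1}\left(\frac{1}{(q^2;q)_\infty}-\sum_{m=0}^{-h-1}\frac{q^{2m}}{(q;q)_m}\right),$$ where the finite sum is empty for $h\ge0$.
   Context: A partition $\lambda=(\lambda_1\ge\cdots\ge\lambda_t>0)$ of $n$ has first-column hook lengths $h_{s,1}(\lambda)=\lambda_s+(t-s)$. An $h$-fixed hook arising from a part of size $k$ is an index $s$ with $h_{s,1}(\lambda)=s+h$ and $\lambda_s=k$. Notation: $(a;q)_\infty=\prod_{j\ge0}(1-aq^j)$, $(q;q)_m=\prod_{j=1}^m(1-q^j)$. *)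

(* Defs.v *)
From mathcomp Require Import all_boot all_order all_algebra.
Set Implicit Arguments. Unset Strict Implicit. Unset Printing Implicit Defensive.
Import GRing.Theory Num.Theory.
Local Open Scope ring_scope.

Definition is_partition (m : int) (l : seq nat) : bool :=
  [&& sorted geq l, all (fun x => 0 < x)%N l & ((sumn l)%:Z == m)].

(* First-column hook length h_{s,1}(lambda) = lambda_s + (t - s), with
   1-based index s (1 <= s <= t = size l). *)
Definition hook1 (l : seq nat) (s : nat) : nat :=
  (nth 0 l s.-1 + (size l - s))%N.

Definition has_fixed_hook (h : int) (k : nat) (l : seq nat) : Prop :=
  exists s : nat, [/\ (1 <= s <= size l)%N,
                      (hook1 l s)%:Z = s%:Z + h & nth 0 l s.-1 = k].

Definition card_is (P : seq nat -> Prop) (k : nat) : Prop :=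
  exists e : seq (seq nat), [/\ uniq e, (forall s, s \in e <-> P s) & size e = k].

(* Main.v *)
Require Import Defs.
From mathcomp Require Import all_boot all_order all_algebra zify.
Import GRing.Theory Num.Theory.
Set Implicit Arguments. Unset Strict Implicit.

Lemma geq_trans : transitive geq.
Proof. move=> a b c /= H1 H2; exact: leq_trans H2 H1. Qed.

Lemma card_bij (P Q : seq nat -> Prop) (f g : seq nat -> seq nat) k :
  card_is Q k -> (forall x, Q x -> P (g x)) -> (forall x, P x -> Q (f x)) ->
  (forall x, P x -> g (f x) = x) -> (forall x, Q x -> f (g x) = x) ->
  card_is P k.
Proof.
move=> [e [ue me se]] QP PQ gf fg; exists (map g e); split.
- rewrite map_inj_in_uniq // => x y /me Qx /me Qy E.
  by rewrite -(fg _ Qx) -(fg _ Qy) E.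
- move=> s; split.
  + by case/mapP=> x /me Qx ->; apply: QP.
  + move=> Ps; rewrite -(gf _ Ps); apply: map_f; apply/me; exact: PQ.
- by rewrite size_map.
Qed.

Lemma card_filter (p : pred (seq nat)) L :
  (forall s, p s -> s \in L) -> card_is p (size (undup (filter p L))).
Proof.
move=> HL; exists (undup (filter p L)); split => //; first exact: undup_uniq.
move=> s; rewrite mem_undup mem_filter; split; first by case/andP.
by move=> ps; rewrite ps HL.
Qed.

Lemma card_ext (P P' : seq nat -> Prop) k :
  card_is P k -> (forall s, P s <-> P' s) -> card_is P' k.
Proof.
move=> [e [ue me se]] E; exists e; split => // s; rewrite me; exact: E.
Qed.

Fixpoint allseq (len N : nat) : seq (seq nat) :=
  if len is len'.+1 then
    [::] :: [seq x :: s | x <- iota 0 N.+1, s <- allseq len' N]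
  else [:: [::]].

Lemma mem_allseq len N s :
  (size s <= len)%N -> all (fun x => x <= N)%N s -> s \in allseq len N.
Proof.
elim: len s => [|len IH] [|x s] //.
move=> Hs /andP[Hx Ha].
have -> : allseq len.+1 N = [::] :: [seq x :: s | x <- iota 0 N.+1, s <- allseq len N] by [].
rewrite in_cons; apply/orP; right.
apply/flatten_mapP; exists x; first by rewrite mem_iota; lia.
by apply: map_f; exact: IH.
Qed.

Lemma size_le_sumn l : all (fun x => 0 < x)%N l -> (size l <= sumn l)%N.
Proof. elim: l => //= x l IH /andP[H1 H2]; have := IH H2; lia. Qed.

Lemma le_sumn l x : x \in l -> (x <= sumn l)%N.
Proof.
elim: l => //= y l IH; rewrite in_cons => /orP[/eqP->|/IH]; lia.
Qed.

Lemma sumn_mapS l : sumn (map S l) = (sumn l + size l)%N.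
Proof. elim: l => //= x l ->; lia. Qed.

Lemma count1_mapS l : all (fun x => 0 < x)%N l -> count_mem 1%N (map S l) = 0%N.
Proof. elim: l => //= x l IH /andP[H1 H2]; rewrite IH //; case: x H1 => //. Qed.

Lemma pairwise_mapS l : pairwise geq l -> pairwise geq (map S l).
Proof.
elim: l => //= x l IH /andP[H1 H2]; rewrite IH // andbT all_map.
apply/allP => y yl /=; move/allP: H1 => /(_ y yl) /=; lia.
Qed.

Lemma sorted_nseq1 c : sorted geq (nseq c 1%N).
Proof. by elim: c => // [[|c]] //=. Qed.

Lemma LemQ l : pairwise geq l -> all (fun x => 0 < x)%N l -> count_mem 1%N l = 1%N ->
  exists mu, [/\ l = map S mu ++ [:: 1%N], pairwise geq mu & all (fun x => 0 < x)%N mu].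
Proof.
case/lastP: l => [|l x] //.
rewrite -cats1 pairwise_cat all_cat count_cat /= => /and3P[Hr Hl _] /andP[Hp /andP[Hx _]].
move=> Hc.
have Hge : forall y, y \in l -> (x <= y)%N.
  by move=> y yl; move/allrelP: Hr => /(_ y x yl); rewrite mem_head => /(_ isT).
have Hx1 : x = 1%N.
  case: (x =P 1%N) => // Hne; exfalso.
  have : count_mem 1%N l = 0%N.
    apply/eqP; rewrite -leqn0 leqNgt -has_count; apply/hasP => -[y yl /= /eqP Ey].
    by have := Hge y yl; move: Hne Hx Ey; lia.
  by move=> H0; move: Hc; rewrite H0 /=; move/eqP/negbTE: Hne => ->.
subst x.
have Hc0 : count_mem 1%N l = 0%N by move: Hc; rewrite eqxx addn1 => -[].
exists (map predn l); split.
- congr (_ ++ _); rewrite -map_comp map_id_in // => y yl /=.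
  by move/allP: Hp => /(_ y yl); case: y yl.
- rewrite pairwise_map; apply: sub_pairwise Hl => a b /=; lia.
- rewrite all_map; apply/allP => y yl /=.
  move/allP: Hp => /(_ y yl) Hy.
  have : y != 1%N.
    apply/negP => /eqP E; move: Hc0 => /eqP; rewrite -leqn0 leqNgt -has_count.
    by move/negP; apply; apply/hasP; exists y => //=; rewrite E.
  lia.
Qed.

Local Open Scope ring_scope.

Lemma LemP (m h : int) l : is_partition m l -> has_fixed_hook h 1 l ->
  exists mu c, [/\ l = mu ++ nseq c 1%N, c%:Z = ((size mu)%:Z + 1 + h)%R,
                   pairwise geq mu, all (fun x => 0 < x)%N mu & (0 < c)%N].
Proof.
move=> /and3P[Hs Hp _] [s [/andP[s1 st] Hh Hn]].
rewrite (sorted_pairwise geq_trans) in Hs.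
exists (take s.-1 l), (size l - s.-1)%N.
have Hd : drop s.-1 l = nseq (size l - s.-1) 1%N.
  have Hlt : (s.-1 < size l)%N by lia.
  rewrite (drop_nth 0 Hlt) Hn.
  have -> : s.-1.+1 = s by lia.
  have Hall : all (pred1 1%N) (drop s l).
    apply/allP => y yd.
    have Hy : (y <= 1)%N.
      have := Hs; rewrite -(cat_take_drop s l) pairwise_cat => /and3P[/allrelP Hr _ _].
      have xin : 1%N \in take s l.
        have Hlt2 : (s.-1 < s)%N by lia.
        rewrite -Hn -(nth_take 0 Hlt2).
        by apply: mem_nth; rewrite size_takel //; lia.
      exact: Hr 1%N y xin yd.
    have Hy0 : (0 < y)%N by move/allP: Hp; apply; exact: mem_drop yd.
    rewrite /=; apply/eqP; lia.
  move/all_pred1P: Hall => ->; rewrite size_drop.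
  by have -> : (size l - s.-1 = (size l - s).+1)%N by lia.
split.
- by rewrite -Hd cat_take_drop.
- rewrite size_takel; last by lia.
  by move: Hh; rewrite /hook1 Hn; lia.
- by move: Hs; rewrite -{1}(cat_take_drop s.-1 l) pairwise_cat => /and3P[].
- by move: Hp; rewrite -{1}(cat_take_drop s.-1 l) all_cat => /andP[].
- lia.
Qed.

Lemma buildP (h : int) mu c : pairwise geq mu -> all (fun x => 0 < x)%N mu ->
  c%:Z = ((size mu)%:Z + 1 + h)%R -> (0 < c)%N ->
  is_partition (sumn mu + c)%N%:Z (mu ++ nseq c 1%N) /\ has_fixed_hook h 1 (mu ++ nseq c 1%N).
Proof.
move=> Hs Hp Hc c0.
split.
- rewrite /is_partition; apply/and3P; split.
  + have Hn : pairwise geq (nseq c 1%N) by rewrite -(sorted_pairwise geq_trans) sorted_nseq1.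
    rewrite (sorted_pairwise geq_trans) pairwise_cat Hs Hn andbT.
    rewrite andbT; apply/allrelP => x y xm; rewrite mem_nseq => /andP[_ /eqP ->].
    by move/allP: Hp => /(_ x xm).
  + by rewrite all_cat Hp all_nseq orbT.
  + by rewrite sumn_cat sumn_nseq mul1n.
- exists (size mu).+1; split.
  + rewrite size_cat size_nseq; apply/andP; split; lia.
  + rewrite /hook1 /= nth_cat ltnn subnn nth_nseq c0 size_cat size_nseq; lia.
  + by rewrite /= nth_cat ltnn subnn nth_nseq c0.
Qed.

Lemma buildQ mu : pairwise geq mu -> all (fun x => 0 < x)%N mu ->
  is_partition (sumn mu + size mu + 1)%N%:Z (map S mu ++ [:: 1%N]) /\
  count_mem 1%N (map S mu ++ [:: 1%N]) = 1%N.
Proof.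
move=> Hs Hp; split.
- rewrite /is_partition; apply/and3P; split.
  + rewrite (sorted_pairwise geq_trans) pairwise_cat pairwise_mapS // andbT.
    apply/allrelP => x y /mapP[z _ ->]; rewrite mem_seq1 => /eqP -> /=; lia.
  + by rewrite all_cat all_map; apply/andP; split => //; apply/allP.
  + by rewrite sumn_cat sumn_mapS /= addn0.
- by rewrite count_cat count1_mapS.
Qed.

Definition fP (h : int) (l : seq nat) : seq nat :=
  map S (take (absz ((size l)%:Z - 1 - h)%R %/ 2) l) ++ [:: 1%N].
Definition gQ (h : int) (l : seq nat) : seq nat :=
  map predn (take (size l).-1 l) ++ nseq (absz ((size l)%:Z + h)%R) 1%N.

Lemma fP_build h mu c : c%:Z = ((size mu)%:Z + 1 + h)%R ->
  fP h (mu ++ nseq c 1%N) = map S mu ++ [:: 1%N].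
Proof.
move=> Hc; rewrite /fP size_cat size_nseq.
have -> : ((size mu + c)%N%:Z - 1 - h)%R = ((size mu * 2)%N)%:Z by lia.
by rewrite absz_nat mulnK // take_size_cat.
Qed.

Lemma gQ_build h mu c : c%:Z = ((size mu)%:Z + 1 + h)%R ->
  gQ h (map S mu ++ [:: 1%N]) = mu ++ nseq c 1%N.
Proof.
move=> Hc; rewrite /gQ size_cat size_map /= addn1 /= take_size_cat ?size_map //.
rewrite -map_comp map_id.
have -> : ((size mu).+1%:Z + h)%R = c%:Z by lia.
by rewrite absz_nat.
Qed.

Theorem theorem3p3 (h : int) (n : nat) :
  exists k : nat,
    card_is (fun l => is_partition n%:Z l /\ has_fixed_hook h 1 l) k /\
    card_is (fun l => [/\ is_partition (n%:Z - h) l,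
                          1 - h <= (size l)%:Z & count_mem 1%N l = 1%N]) k.
Proof.
pose p := fun l : seq nat => [&& is_partition (n%:Z - h) l, 1 - h <= (size l)%:Z
                               & count_mem 1%N l == 1%N].
pose N := absz (n%:Z - h).
have HQ : card_is (fun l => [/\ is_partition (n%:Z - h) l,
                          1 - h <= (size l)%:Z & count_mem 1%N l = 1%N])
            (size (undup (filter p (allseq N N)))).
  apply: card_ext; first apply: card_filter.
    move=> s /and3P[/and3P[_ Hp /eqP Hsum] _ _]; apply: mem_allseq.
      rewrite /N -Hsum absz_nat; exact: size_le_sumn.
    by apply/allP => x xs; rewrite /N -Hsum absz_nat; exact: le_sumn.
  move=> s; rewrite /p; split; first by case/and3P => ? ? /eqP.
  by case=> ? ? ?; apply/and3P; split => //; apply/eqP.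
exists (size (undup (filter p (allseq N N)))); split => //.
apply: (@card_bij _ _ (fP h) (gQ h) _ HQ).
- move=> l [Hl Hsz Hc]; move: (Hl) => /and3P[Hs Hp /eqP Hsum].
  rewrite (sorted_pairwise geq_trans) in Hs.
  have [mu [El Hmu Hpos]] := LemQ Hs Hp Hc.
  have Hc' : (absz ((size mu)%:Z + 1 + h))%:Z = (size mu)%:Z + 1 + h.
    rewrite gez0_abs //; move: Hsz; rewrite El size_cat size_map /=; lia.
  rewrite El (gQ_build Hc').
  have c0 : (0 < absz ((size mu)%:Z + 1 + h)%R)%N.
    move: Hsz; rewrite El size_cat size_map /=; lia.
  have [HP1 HP2] := buildP Hmu Hpos Hc' c0; split => //.
  move: HP1; congr (is_partition _ _).
  move: Hsum; rewrite El sumn_cat sumn_mapS /=; lia.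
- move=> l [Hl Hf]; have [mu [c [El Hc Hmu Hpos c0]]] := LemP Hl Hf.
  rewrite El (fP_build Hc); have [HQ1 HQ2] := buildQ Hmu Hpos.
  move: (Hl) => /and3P[_ _ /eqP Hsum].
  split => //.
  + move: HQ1; congr (is_partition _ _); move: Hsum; rewrite El sumn_cat sumn_nseq; lia.
  + rewrite size_cat size_map /=; lia.
- move=> l [Hl Hf]; have [mu [c [El Hc Hmu Hpos c0]]] := LemP Hl Hf.
  by rewrite El (fP_build Hc) (gQ_build Hc).
- move=> l [Hl Hsz Hc]; move: (Hl) => /and3P[Hs Hp _].
  rewrite (sorted_pairwise geq_trans) in Hs.
  have [mu [El Hmu Hpos]] := LemQ Hs Hp Hc.
  have Hc' : (absz ((size mu)%:Z + 1 + h))%:Z = (size mu)%:Z + 1 + h.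
    rewrite gez0_abs //; move: Hsz; rewrite El size_cat size_map /=; lia.
  by rewrite El (gQ_build Hc') (fP_build Hc').
Qed.
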